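(* For every positive integer $n$ there exists an addition chain producing $2^n-1$ whose length $\delta(2^n-1)$ satisfies $$\delta(2^n-1)\leq 2n-1-2\left\lfloor \frac{n-1}{2^{\lfloor \frac{\log n}{\log 2}\rfloor}}\right\rfloor+\left\lfloor \frac{\log n}{\log 2}\right\rfloor.$$
   Context: An addition chain producing $N$ is a sequence $1,2,s_3,\ldots,s_k=N$ (or just $1$ for $N=1$) in which every term after the first is the sum of two (not necessarily distinct) earlier terms; its length is the number of terms excluding the initial $1$. $\lfloor\cdot\rfloor$ is the floor function and $\log$ the natural logarithm. *)

(* Defs.v *)
From Stdlib Require Import Reals Lia List.
Import ListNotations.

(* It produces N if its last term is N; its length is the
   number of terms excluding the initial 1, i.e. length c - 1. *)
Definition is_addition_chain (c : list nat) : Prop :=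
  nth 0 c 0 = 1%nat /\ (1 <= length c)%nat /\
  forall i, (1 <= i < length c)%nat ->
    exists j k, (j < i)%nat /\ (k < i)%nat /\
      nth i c 0 = (nth j c 0 + nth k c 0)%nat.

Definition chain_produces (c : list nat) (N : nat) : Prop :=
  last c 0 = N.

Definition chain_length (c : list nat) : nat := (length c - 1)%nat.

Definition floorR (x : R) : Z := Int_part x.

(* Main.v *)
Require Import Defs.
From Stdlib Require Import Reals ZArith List Lia Lra.
Open Scope R_scope.

Definition g (i : nat) : nat :=
  match i with
  | O => 1%nat
  | S j => if Nat.even j then (2 ^ (j / 2 + 2) - 2)%nat else (2 ^ (j / 2 + 2) - 1)%nat
  end.

Lemma g_odd t : g (S (2 * t)) = (2 ^ (t + 2) - 2)%nat.
Proof.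
  change (g (S (2 * t))) with (if Nat.even (2 * t) then (2 ^ (2 * t / 2 + 2) - 2)%nat else (2 ^ (2 * t / 2 + 2) - 1)%nat).
  rewrite Nat.even_even.
  replace (2 * t / 2)%nat with t by (rewrite Nat.mul_comm, Nat.div_mul; lia). reflexivity.
Qed.

Lemma g_even t : g (S (2 * t + 1)) = (2 ^ (t + 2) - 1)%nat.
Proof.
  change (g (S (2 * t + 1))) with (if Nat.even (2 * t + 1) then (2 ^ ((2 * t + 1) / 2 + 2) - 2)%nat else (2 ^ ((2 * t + 1) / 2 + 2) - 1)%nat).
  replace (Nat.even (2 * t + 1)) with false.
  2:{ rewrite Nat.even_add, Nat.even_even. reflexivity. }
  replace ((2 * t + 1) / 2)%nat with t. reflexivity.
  apply Nat.div_unique with 1%nat; lia.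
Qed.

Lemma pow2_ge1 m : (1 <= 2 ^ m)%nat.
Proof. induction m; simpl; lia. Qed.

Definition chain (n : nat) := map g (seq 0 (2 * n - 1)).

Lemma chain_ok n : (1 <= n)%nat -> is_addition_chain (chain n).
Proof.
  intros Hn. unfold chain. split; [|split].
  - replace (2 * n - 1)%nat with (S (2 * n - 2)) by lia. reflexivity.
  - rewrite length_map, length_seq. lia.
  - intros i Hi. rewrite length_map, length_seq in Hi.
    assert (E : forall m, (m < 2 * n - 1)%nat -> nth m (map g (seq 0 (2 * n - 1))) 0%nat = g m).
    { intros m Hm. rewrite nth_indep with (d' := g 0%nat) by (rewrite length_map, length_seq; lia).
      rewrite map_nth, seq_nth by lia. reflexivity. }
    destruct i as [|j]; [lia|].
    destruct (Nat.Even_or_Odd j) as [[t Ht]|[t Ht]]; subst j.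
    + exists (2 * t)%nat, (2 * t)%nat. split; [lia|split; [lia|]].
      rewrite !E by lia. rewrite g_odd.
      destruct t as [|t].
      * reflexivity.
      * replace (2 * S t)%nat with (S (2 * t + 1)) by lia. rewrite g_even.
        replace (S t + 2)%nat with (S (t + 2)) by lia.
        pose proof (pow2_ge1 (t + 2)). rewrite Nat.pow_succ_r'. lia.
    + exists (S (2 * t)), 0%nat. split; [lia|split; [lia|]].
      rewrite !E by lia. rewrite g_odd, g_even. simpl (g 0).
      assert (4 <= 2 ^ (t + 2))%nat.
      { replace (t + 2)%nat with (S (S t)) by lia. rewrite !Nat.pow_succ_r'.
        pose proof (pow2_ge1 t). lia. }
      lia.
Qed.

Lemma chain_last n : (1 <= n)%nat -> last (chain n) 0%nat = (2 ^ n - 1)%nat.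
Proof.
  intros Hn. unfold chain.
  replace (2 * n - 1)%nat with (S (2 * n - 2)) by lia.
  rewrite seq_S, map_app. cbn [map]. rewrite last_last. replace (0 + (2 * n - 2))%nat with (2 * n - 2)%nat by lia.
  destruct n as [|m]; [lia|]. destruct m as [|m]; [reflexivity|].
  replace (2 * S (S m) - 2)%nat with (S (2 * m + 1)) by lia.
  rewrite g_even. f_equal. f_equal. lia.
Qed.

Theorem mainTheorem10 (n : nat) : (1 <= n)%nat ->
  exists c : list nat,
    is_addition_chain c /\ chain_produces c (2 ^ n - 1)%nat /\
    let L := floorR (ln (INR n) / ln 2) in
    (Z.of_nat (chain_length c) <=
       2 * Z.of_nat n - 1
       - 2 * floorR (INR (n - 1) / 2 ^ (Z.to_nat L))
       + L)%Z.
Proof.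
  intros Hn. exists (chain n). split; [apply chain_ok; auto|split; [apply chain_last; auto|]].
  intros L.
  assert (Hlen : chain_length (chain n) = (2 * n - 2)%nat).
  { unfold chain_length, chain. rewrite length_map, length_seq. lia. }
  rewrite Hlen.
  assert (Hln2 : 0 < ln 2) by (pose proof ln_lt_2; lra).
  assert (Hnpos : 0 < INR n) by (apply lt_0_INR; lia).
  assert (Hx0 : 0 <= ln (INR n) / ln 2).
  { apply Rmult_le_pos; [|left; apply Rinv_0_lt_compat; auto].
    destruct (Nat.eq_dec n 1) as [->|Hn1]; [simpl; rewrite ln_1; lra|].
    left. rewrite <- ln_1. apply ln_increasing; [lra|]. apply lt_1_INR. lia. }
  pose proof (base_Int_part (ln (INR n) / ln 2)) as [HL1 HL2].
  fold (floorR (ln (INR n) / ln 2)) in HL1, HL2. fold L in HL1, HL2.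
  assert (HL0 : (0 <= L)%Z).
  { assert (-1 < IZR L) by lra. apply lt_IZR in H. lia. }
  set (k := Z.to_nat L).
  assert (HkL : IZR L = INR k) by (unfold k; rewrite INR_IZR_INZ, Z2Nat.id; auto).
  assert (Hlt : INR n < 2 ^ (S k)).
  { apply ln_lt_inv; [auto| apply pow_lt; lra|].
    rewrite ln_pow by lra. rewrite S_INR, <- HkL.
    assert (ln (INR n) / ln 2 < IZR L + 1) by lra.
    apply (Rmult_lt_compat_r (ln 2)) in H; auto.
    unfold Rdiv in H. rewrite Rmult_assoc, Rinv_l in H by lra. lra. }
  assert (Hnk : (n < 2 ^ S k)%nat).
  { apply INR_lt. rewrite pow_INR. simpl (INR 2). auto. }
  set (y := INR (n - 1) / 2 ^ k).
  pose proof (base_Int_part y) as [HF1 HF2].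
  fold (floorR y) in HF1, HF2.
  assert (Hpk : 0 < 2 ^ k) by (apply pow_lt; lra).
  destruct k as [|k'] eqn:Ek.
  -
    assert (L = 0%Z) by lia.
    assert (n = 1%nat) by (simpl in Hnk; lia). subst n.
    assert (Hy0 : y = 0) by (unfold y; simpl; lra).
    rewrite Hy0 in HF1 |- *.
    assert (floorR 0 <= 0)%Z by (apply le_IZR; exact HF1).
    lia.
  - assert (Hy : y < 2).
    { unfold y. apply Rmult_lt_reg_r with (2 ^ S k'); auto.
      unfold Rdiv. rewrite Rmult_assoc, Rinv_l by lra.
      assert (INR (n - 1) < INR (2 ^ S (S k'))) by (apply lt_INR; lia).
      rewrite pow_INR in H. simpl (INR 2) in H. simpl in H |- *. replace (1+1) with 2 in H by ring. lra. }
    assert (floorR y <= 1)%Z.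
    { assert (IZR (floorR y) < 2) by lra. apply lt_IZR in H. lia. }
    assert (1 <= L)%Z by lia.
    lia.
Qed.
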